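(* For the qudit unitaries $I=\sum_{i=0}^{d-1}|i\rangle\langle i|$ and $V=|0\rangle\langle 0|-\sum_{i=1}^{d-1}|i\rangle\langle i|$, the corresponding unitary channels are perfectly distinguishable with an unentangled input state (e.g. $|+\rangle=(|0\rangle+|1\rangle)/\sqrt2$) for every $d$, whereas with a maximally entangled input state the optimal success probability $\tfrac12\big[1+\sqrt{1-(1-2/d)^2}\big]$ tends to $\tfrac12$ (random guessing) as $d\to\infty$.
   Context: Single-shot discrimination of two unitary channels $\rho\mapsto U\rho U^\dagger$ with uniform priors; an input state (possibly entangled with an ancilla) is prepared, one use of the unknown channel is applied, and an optimal measurement is performed. *)

(* Defs.v *)
From HB Require Import structures.
From mathcomp Require Import all_boot all_order all_algebra.
From mathcomp Require Import complex mxtens.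
From mathcomp Require Import all_classical all_reals all_analysis.
Set Implicit Arguments.
Unset Strict Implicit.
Unset Printing Implicit Defensive.
Import Order.TTheory GRing.Theory Num.Theory.
Local Open Scope ring_scope.

Section Qudit.
Variable R : realType.
Local Notation C := (R[i]).

Definition toC (x : R) : C := Complex x 0.

Definition adj {m n : nat} (A : 'M[C]_(m, n)) : 'M[C]_(n, m) :=
  (map_mx (fun z : C => z^*) A)^T.

(* computational basis ket |i> of C^n (zero vector if i >= n) *)
Definition ket (n i : nat) : 'cV[C]_n := \col_(j < n) ((j : nat) == i)%:R.

Definition pure_state {n : nat} (psi : 'cV[C]_n) : Prop :=
  (adj psi *m psi) 0 0 = 1.

Definition psd {n : nat} (A : 'M[C]_n) : Prop :=
  adj A = A /\ forall v : 'cV[C]_n, 0 <= (adj v *m A *m v) 0 0.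

Definition povm2 {n : nat} (E0 E1 : 'M[C]_n) : Prop :=
  psd E0 /\ psd E1 /\ E0 + E1 = 1%:M.

Definition out_state {d k : nat} (U : 'M[C]_d) (psi : 'cV[C]_(d * k))
  : 'M[C]_(d * k) :=
  let W := U *t (1%:M : 'M[C]_k) in W *m (psi *m adj psi) *m adj W.

(* success probability with uniform priors: outcome 0 -> guess U0,
   outcome 1 -> guess U1 *)
Definition succ_prob {d k : nat} (U0 U1 : 'M[C]_d) (psi : 'cV[C]_(d * k))
  (E0 E1 : 'M[C]_(d * k)) : C :=
  2^-1 * (\tr (E0 *m out_state U0 psi) + \tr (E1 *m out_state U1 psi)).

Definition opt_succ_prob {d k : nat} (U0 U1 : 'M[C]_d)
  (psi : 'cV[C]_(d * k)) (p : C) : Prop :=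
  (exists E0 E1 : 'M[C]_(d * k), povm2 E0 E1 /\ succ_prob U0 U1 psi E0 E1 = p)
  /\ (forall E0 E1 : 'M[C]_(d * k), povm2 E0 E1 ->
        succ_prob U0 U1 psi E0 E1 <= p).

Definition perfectly_distinguishable {d k : nat} (U0 U1 : 'M[C]_d)
  (psi : 'cV[C]_(d * k)) : Prop :=
  exists E0 E1 : 'M[C]_(d * k), povm2 E0 E1 /\ succ_prob U0 U1 psi E0 E1 = 1.

Definition Iq (d : nat) : 'M[C]_d := \sum_(0 <= i < d) ket d i *m adj (ket d i).
Definition Vq (d : nat) : 'M[C]_d :=
  ket d 0 *m adj (ket d 0) - \sum_(1 <= i < d) ket d i *m adj (ket d i).

Definition plus_state (d : nat) : 'cV[C]_d :=
  (toC (Num.sqrt 2))^-1 *: (ket d 0 + ket d 1).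

Definition max_ent (d : nat) : 'cV[C]_(d * d) :=
  (toC (Num.sqrt d%:R))^-1 *: \sum_(0 <= i < d) (ket d i *t ket d i).

Definition ent_opt (d : nat) : R :=
  2^-1 * (1 + Num.sqrt (1 - (1 - 2 / d%:R) ^+ 2)).

End Qudit.

(* Main.v *)
Require Import Defs.
From HB Require Import structures.
From mathcomp Require Import all_boot all_order all_algebra.
From mathcomp Require Import complex mxtens.
From mathcomp Require Import all_classical all_reals all_analysis.
From mathcomp Require Import ring lra.
Import Order.TTheory GRing.Theory Num.Theory.
Import numFieldNormedType.Exports.
Local Open Scope classical_set_scope.
Local Open Scope ring_scope.
Set Implicit Arguments.
Unset Strict Implicit.
Unset Printing Implicit Defensive.

Section G.
Variable R : realType.
Local Notation C := (R[i]).

Lemma toC_real (x : R) : (toC x)^* = toC x.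
Proof. by apply/conj_Creal; rewrite /toC complex_real. Qed.

Lemma toCE (x : R) : toC x = real_complex R x.
Proof. by []. Qed.

Lemma adjE m n (A : 'M[C]_(m, n)) i j : adj A i j = (A j i)^*.
Proof. by rewrite !mxE. Qed.

Lemma adj_mul m n p (A : 'M[C]_(m, n)) (B : 'M[C]_(n, p)) :
  adj (A *m B) = adj B *m adj A.
Proof.
apply/matrixP=> i j; rewrite !mxE rmorph_sum; apply: eq_bigr=> k _.
by rewrite !mxE rmorphM mulrC.
Qed.

Lemma adjD m n (A B : 'M[C]_(m, n)) : adj (A + B) = adj A + adj B.
Proof. by apply/matrixP=> i j; rewrite !mxE rmorphD. Qed.

Lemma adjN m n (A : 'M[C]_(m, n)) : adj (- A) = - adj A.
Proof. by apply/matrixP=> i j; rewrite !mxE rmorphN. Qed.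

Lemma adjB m n (A B : 'M[C]_(m, n)) : adj (A - B) = adj A - adj B.
Proof. by rewrite adjD adjN. Qed.

Lemma adjZ m n c (A : 'M[C]_(m, n)) : adj (c *: A) = c^* *: adj A.
Proof. by apply/matrixP=> i j; rewrite !mxE rmorphM. Qed.

Lemma adjK m n (A : 'M[C]_(m, n)) : adj (adj A) = A.
Proof. apply/matrixP=> i j; rewrite !mxE; exact: conjCK. Qed.

Lemma adj1 n : adj (1%:M : 'M[C]_n) = 1%:M.
Proof. by apply/matrixP=> i j; rewrite !mxE rmorphMn rmorph1 eq_sym. Qed.

Lemma adj_sum n m (I : Type) (r : seq I) (P : pred I) (F : I -> 'M[C]_(m, n)) :
  adj (\sum_(i <- r | P i) F i) = \sum_(i <- r | P i) adj (F i).
Proof.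
apply/matrixP=> i j; rewrite !mxE !summxE rmorph_sum.
by apply: eq_bigr=> k _; rewrite !mxE.
Qed.

Definition ip n (x y : 'cV[C]_n) : C := (adj x *m y) 0 0.

Lemma ipE n (x y : 'cV[C]_n) : ip x y = \sum_k (x k 0)^* * y k 0.
Proof. by rewrite /ip mxE; apply: eq_bigr=> k _; rewrite !mxE. Qed.

Lemma ip_ge0 n (x : 'cV[C]_n) : 0 <= ip x x.
Proof.
rewrite ipE; apply: sumr_ge0=> k _; rewrite mulrC; exact: mul_conjC_ge0.
Qed.

Lemma ipC n (x y : 'cV[C]_n) : ip y x = (ip x y)^*.
Proof.
rewrite !ipE rmorph_sum; apply: eq_bigr=> k _.
by rewrite rmorphM /= conjCK mulrC.
Qed.

Lemma ipDl n (x y z : 'cV[C]_n) : ip (x + y) z = ip x z + ip y z.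
Proof. by rewrite /ip adjD mulmxDl mxE. Qed.
Lemma ipDr n (x y z : 'cV[C]_n) : ip z (x + y) = ip z x + ip z y.
Proof. by rewrite /ip mulmxDr mxE. Qed.
Lemma ipNl n (x z : 'cV[C]_n) : ip (- x) z = - ip x z.
Proof. by rewrite /ip adjN mulNmx mxE. Qed.
Lemma ipNr n (x z : 'cV[C]_n) : ip z (- x) = - ip z x.
Proof. by rewrite /ip mulmxN mxE. Qed.
Lemma ipZl n c (x z : 'cV[C]_n) : ip (c *: x) z = c^* * ip x z.
Proof. by rewrite /ip adjZ -scalemxAl mxE. Qed.
Lemma ipZr n c (x z : 'cV[C]_n) : ip z (c *: x) = c * ip z x.
Proof. by rewrite /ip -scalemxAr mxE. Qed.
Lemma ip_sumr n (I : Type) (r : seq I) (P : pred I) (F : I -> 'cV[C]_n) z :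
  ip z (\sum_(i <- r | P i) F i) = \sum_(i <- r | P i) ip z (F i).
Proof. by rewrite /ip mulmx_sumr summxE. Qed.
Lemma ip_suml n (I : Type) (r : seq I) (P : pred I) (F : I -> 'cV[C]_n) z :
  ip (\sum_(i <- r | P i) F i) z = \sum_(i <- r | P i) ip (F i) z.
Proof. by rewrite /ip adj_sum mulmx_suml summxE. Qed.

Lemma ip_adj n (E : 'M[C]_n) x y : ip x (E *m y) = ip (adj E *m x) y.
Proof. by rewrite /ip adj_mul adjK mulmxA. Qed.

Lemma tr_out d k (U : 'M[C]_d) (psi : 'cV[C]_(d * k)) (E : 'M[C]_(d * k)) :
  \tr (E *m out_state U psi) =
  ip ((U *t (1%:M : 'M[C]_k)) *m psi) (E *m ((U *t (1%:M : 'M[C]_k)) *m psi)).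
Proof.
rewrite /out_state /=; set W := U *t _.
rewrite -!mulmxA -adj_mul.
have -> : E *m (W *m (psi *m adj (W *m psi))) =
  (E *m (W *m psi)) *m adj (W *m psi) by rewrite !mulmxA.
rewrite mxtrace_mulC /ip /mxtrace big_ord1.
by [].
Qed.

Lemma adj_ip n (u x : 'cV[C]_n) : adj u *m x = (ip u x)%:M.
Proof. by rewrite /ip {1}[adj u *m x]mx11_scalar. Qed.

Lemma psd_proj n (P : 'M[C]_n) : adj P = P -> P *m P = P -> psd P.
Proof.
move=> hP hPP; split=> // v.
have -> : adj v *m P *m v = adj (P *m v) *m (P *m v).
  by rewrite adj_mul hP mulmxA -(mulmxA _ P P) hPP.
exact: ip_ge0.
Qed.

Definition proj n (c : R) (u : 'cV[C]_n) : 'M[C]_n := toC c *: (u *m adj u).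

Lemma proj_adj n c (u : 'cV[C]_n) : adj (proj c u) = proj c u.
Proof. by rewrite /proj adjZ adj_mul adjK toC_real. Qed.

Lemma proj_mul n c (u : 'cV[C]_n) x :
  proj c u *m x = (toC c * ip u x) *: u.
Proof.
by rewrite /proj -scalemxAl -mulmxA adj_ip mul_mx_scalar scalerA.
Qed.

Lemma proj_idem n c (u : 'cV[C]_n) : toC c * ip u u = 1 ->
  proj c u *m proj c u = proj c u.
Proof.
move=> h; rewrite {2}/proj -scalemxAr mulmxA proj_mul h -scalemxAl scalerA.
by rewrite mulr1.
Qed.

Lemma povm_proj n c (u : 'cV[C]_n) : toC c * ip u u = 1 ->
  povm2 (proj c u) (1%:M - proj c u).
Proof.
move=> h; split; last split.
- by apply: psd_proj; rewrite ?proj_adj ?proj_idem.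
- apply: psd_proj; first by rewrite adjB adj1 proj_adj.
  by rewrite mulmxBl mul1mx mulmxBr mulmx1 proj_idem // subrr subr0.
- by rewrite addrC subrK.
Qed.

Lemma ip_proj n c (u x : 'cV[C]_n) :
  ip x (proj c u *m x) = toC c * (ip u x * ip x u).
Proof. by rewrite proj_mul ipZr mulrA. Qed.

Lemma ip_ket d a b : (a < d)%N -> ip (ket R d a) (ket R d b) = (a == b)%:R.
Proof.
move=> ha; rewrite ipE (bigD1 (Ordinal ha)) //= big1 ?addr0 => [|j hj].
  by rewrite !mxE /= eqxx conjC1 mul1r.
have hja : (j : nat) != a.
  by apply: contra hj => /eqP h; apply/eqP/val_inj.
by rewrite !mxE (negbTE hja) conjC0 mul0r.
Qed.

Lemma ip_tens m n (a c : 'cV[C]_m) (b e : 'cV[C]_n) :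
  ip (a *t b : 'cV[C]_(m * n)) (c *t e : 'cV[C]_(m * n)) = ip a c * ip b e.
Proof.
rewrite !ipE mulr_sum; apply: eq_bigr => k _.
rewrite !mxE.
have -> : (mxtens_unindex (0 : 'I_(1 * 1))).1 = 0 by apply: ord1.
have -> : (mxtens_unindex (0 : 'I_(1 * 1))).2 = 0 by apply: ord1.
by rewrite rmorphM /= mulrACA.
Qed.

Lemma ketE d i j : ket R d i j 0 = ((j : nat) == i)%:R.
Proof. by rewrite !mxE. Qed.

Lemma Iq1 d : Iq R d = 1%:M.
Proof.
apply/matrixP=> a b; rewrite /Iq summxE big_mkord (bigD1 a) //= big1 ?addr0.
  rewrite !mxE big_ord1 !mxE eqxx conjC_nat mul1r.
  case: (altP (a =P b)) => [->|hab]; rewrite ?eqxx //.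
  have h : (b : nat) != a by move: hab; rewrite eq_sym.
  by rewrite (negbTE h).
move=> i hi; rewrite !mxE big_ord1 !mxE.
have -> : ((a : nat) == i) = false.
  by apply/negbTE; apply: contra hi => /eqP h; apply/eqP/val_inj.
by rewrite mul0r.
Qed.

Lemma Vq2 d : (0 < d)%N ->
  Vq R d = 2 *: (ket R d 0 *m adj (ket R d 0)) - 1%:M.
Proof.
move=> hd; rewrite /Vq; have := Iq1 d; rewrite /Iq big_ltn // => <-.
by rewrite scaler_nat mulr2n opprD addrA addrK.
Qed.

Lemma Vq_ket d i : (i < d)%N ->
  Vq R d *m ket R d i = ((i == 0)%:R * 2) *: ket R d 0 - ket R d i.
Proof.
move=> hi; rewrite Vq2; last by apply: leq_ltn_trans hi.
rewrite mulmxBl mul1mx -scalemxAl -mulmxA adj_ip ip_ket; last first.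
  by apply: leq_ltn_trans hi.
by rewrite mul_mx_scalar scalerA mulrC eq_sym.
Qed.

Lemma Vq_adj d : (0 < d)%N -> adj (Vq R d) = Vq R d.
Proof.
move=> hd; rewrite Vq2 // adjB adj1 adjZ adj_mul adjK.
by rewrite conjC_nat.
Qed.

Lemma Vq_sq d : (0 < d)%N -> Vq R d *m Vq R d = 1%:M.
Proof.
move=> hd; rewrite Vq2 //; set P := ket R d 0 *m adj (ket R d 0).
have hP : P *m P = P.
  by rewrite /P mulmxA -(mulmxA _ (adj _)) adj_ip ip_ket // mul_mx_scalar scale1r.
rewrite mulmxBl mulmxBr mulmxBr !mul1mx mulmx1 -!scalemxAl -!scalemxAr hP.
rewrite scalerA opprB addrA. 
rewrite addrAC -!scalerBl.
have -> : 2 * 2 - 2 - 2 = 0 :> C by ring.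
by rewrite scale0r add0r.
Qed.

Lemma toCM (a b : R) : toC (a * b) = toC a * toC b.
Proof. by rewrite !toCE rmorphM. Qed.
Lemma toCD (a b : R) : toC (a + b) = toC a + toC b.
Proof. by rewrite !toCE rmorphD. Qed.
Lemma toCN (a : R) : toC (- a) = - toC a.
Proof. by rewrite !toCE rmorphN. Qed.
Lemma toCB (a b : R) : toC (a - b) = toC a - toC b.
Proof. by rewrite !toCE rmorphB. Qed.
Lemma toCV (a : R) : toC (a^-1) = (toC a)^-1.
Proof. by rewrite !toCE fmorphV. Qed.
Lemma toCn n : toC (n%:R : R) = n%:R.
Proof. by rewrite !toCE rmorph_nat. Qed.
Lemma toC1 : toC (1 : R) = 1.
Proof. by rewrite !toCE rmorph1. Qed.
Lemma toC0 : toC (0 : R) = 0.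
Proof. by rewrite !toCE rmorph0. Qed.
Lemma toC_eq0 (a : R) : (toC a == 0) = (a == 0).
Proof. by rewrite toCE fmorph_eq0. Qed.
Lemma toC_ge0 (a : R) : (0 <= toC a) = (0 <= a).
Proof. by rewrite toCE lecR. Qed.
Lemma toC_le (a b : R) : (toC a <= toC b) = (a <= b).
Proof. by rewrite !toCE lecR. Qed.

Lemma toCV_real (a : R) : ((toC a)^-1)^* = (toC a)^-1.
Proof. by rewrite -toCV toC_real. Qed.

Lemma toC_sqrt2 : (toC (Num.sqrt (2:R)))^-1 * (toC (Num.sqrt (2:R)))^-1 * 2 = 1 :> C.
Proof.
have h2 : (0 : R) <= 2 by [].
rewrite -!toCV -[2 : C]toCn -!toCM.
rewrite -invfM -expr2 sqr_sqrtr // mulVf // toC1.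
Qed.
Lemma part1 d : (2 <= d)%N ->
  perfectly_distinguishable (Iq R d) (Vq R d)
       (plus_state R d *t (ket R 1 0 : 'cV[R[i]]_1)).
Proof.
move=> hd.
have h0 : (0 < d)%N by apply: leq_trans hd.
set p := plus_state R d; set k := ket R 1 0.
set x0 := (p *t k : 'cV[C]_(d * 1)).
set x1 := ((Vq R d *m p) *t k : 'cV[C]_(d * 1)).
have hx0 : (Iq R d *t (1%:M : 'M[C]_1)) *m (p *t k) = x0.
  by rewrite tensmx_mul Iq1 !mul1mx.
have hx1 : (Vq R d *t (1%:M : 'M[C]_1)) *m (p *t k) = x1.
  by rewrite tensmx_mul !mul1mx.
have hkk : ip k k = 1 by rewrite ip_ket.
have e00 : ip (ket R d 0) (ket R d 0) = 1 by rewrite ip_ket.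
have e11 : ip (ket R d 1) (ket R d 1) = 1 by rewrite ip_ket.
have e01 : ip (ket R d 0) (ket R d 1) = 0 by rewrite ip_ket.
have e10 : ip (ket R d 1) (ket R d 0) = 0 by rewrite ip_ket.
have hpp : ip p p = 1.
  rewrite /p /plus_state ipZl ipZr !ipDl !ipDr e00 e11 e01 e10.
  rewrite !addr0 add0r toCV_real mulrA -[1 + 1]/(2 : C); exact: toC_sqrt2.
have hVp : Vq R d *m p = (toC (Num.sqrt 2))^-1 *: (ket R d 0 - ket R d 1).
  rewrite /p /plus_state -scalemxAr mulmxDr !Vq_ket //=.
  congr (_ *: _); rewrite mul0r scale0r sub0r mul1r scaler_nat mulr2n.
  by rewrite addrK.
have h00 : ip x0 x0 = 1 by rewrite /x0 ip_tens hpp hkk mulr1.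
have h11 : ip x1 x1 = 1.
  by rewrite /x1 ip_tens hkk mulr1 ip_adj Vq_adj // mulmxA Vq_sq // mul1mx.
have h01 : ip x0 x1 = 0.
  rewrite /x1 /x0 ip_tens hkk mulr1 hVp /p /plus_state ipZl ipZr.
  rewrite !ipDl !ipDr !ipNr e00 e11 e01 e10.
  by rewrite subr0 sub0r addrN mulr0 mulr0.
have h10 : ip x1 x0 = 0 by rewrite ipC h01 conjC0.
exists (proj 1 x0), (1%:M - proj 1 x0); split.
  by apply: povm_proj; rewrite h00 mulr1 /toC.
rewrite /succ_prob !tr_out hx0 hx1 mulmxBl mul1mx ipDr ipNr !ip_proj.
rewrite h00 h01 h10 h11 mulr0 mulr0 subr0 mulr1 toC1 mulr1.
by rewrite -[1 + 1]/(2 : C) mulVf.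
Qed.

Lemma tensDl m n p q (A B : 'M[C]_(m, n)) (D : 'M[C]_(p, q)) :
  (A + B) *t D = A *t D + B *t D.
Proof. by apply/matrixP=> i j; rewrite !mxE mulrDl. Qed.
Lemma tensNl m n p q (A : 'M[C]_(m, n)) (D : 'M[C]_(p, q)) :
  (- A) *t D = - (A *t D).
Proof. by apply/matrixP=> i j; rewrite !mxE mulNr. Qed.
Lemma tensZl m n p q c (A : 'M[C]_(m, n)) (D : 'M[C]_(p, q)) :
  (c *: A) *t D = c *: (A *t D).
Proof. by apply/matrixP=> i j; rewrite !mxE mulrA. Qed.

Lemma sum_delta d i : (i < d)%N -> \sum_(0 <= j < d) ((i == j)%:R : C) = 1.
Proof.
move=> hi.
rewrite (eq_big_nat _ _ (F2 := fun j => if j == i then 1 else 0)); last first.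
  by move=> j _; rewrite eq_sym; case: (j == i).
by rewrite -big_mkcond big_nat1_eq /= hi.
Qed.

Lemma polar n (E : 'M[C]_n) u v :
  ip (u + v) (E *m (u + v)) - ip (u - v) (E *m (u - v)) =
  2 * (ip u (E *m v) + ip v (E *m u)).
Proof.
rewrite !mulmxDr !mulmxN !ipDl !ipDr !ipNl !ipNr.
ring.
Qed.

Lemma ipZZ n (E : 'M[C]_n) c u :
  ip (c *: u) (E *m (c *: u)) = c^* * c * ip u (E *m u).
Proof. by rewrite -scalemxAr ipZl ipZr mulrA. Qed.

Lemma psd_ip n (E : 'M[C]_n) v : psd E -> 0 <= ip v (E *m v).
Proof. by case=> _ /(_ v); rewrite /ip mulmxA. Qed.

Lemma sqrt_id (d : nat) : (0 < d)%N ->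
  Num.sqrt (1 - (1 - 2 / d%:R) ^+ 2) = 2 * Num.sqrt (d%:R - 1) / d%:R :> R.
Proof.
move=> hd.
have hd0 : (d%:R : R) != 0 by rewrite pnatr_eq0 -lt0n.
have hd1 : (0 : R) <= d%:R - 1 by rewrite subr_ge0 ler1n.
have -> : 1 - (1 - 2 / d%:R) ^+ 2 = (2 * Num.sqrt (d%:R - 1) / d%:R) ^+ 2 :> R.
  rewrite !exprMn sqr_sqrtr //; field.
  by [].
rewrite sqrtr_sqr ger0_norm //.
Qed.

Lemma tensmx_mulv m n p q (A : 'M[C]_(m, n)) (B : 'M[C]_(p, q))
  (c : 'cV[C]_n) (f : 'cV[C]_q) :
  (A *t B) *m (c *t f : 'cV[C]_(n * q)) = ((A *m c) *t (B *m f) : 'cV[C]_(m * p)).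
Proof. exact: (tensmx_mul A B c f). Qed.

Lemma ipkk d i j : (i < d)%N ->
  ip (ket R d i *t ket R d i : 'cV[C]_(d * d)) (ket R d j *t ket R d j : 'cV[C]_(d * d))
  = (i == j)%:R.
Proof. by move=> hi; rewrite ip_tens !ip_ket //; case: (i == j); rewrite ?mulr1 ?mulr0. Qed.

Lemma part2 d : (2 <= d)%N ->
  opt_succ_prob (Iq R d) (Vq R d) (max_ent R d) (toC (ent_opt R d)).
Proof.
move=> hd.
have h0 : (0 < d)%N by apply: leq_trans hd.
set kk := fun i => (ket R d i *t ket R d i : 'cV[C]_(d * d)).
set S := \sum_(0 <= i < d) kk i.
set e := kk 0%N.
set g := S - e.
set G := toC (Num.sqrt (d%:R : R)).
set T := toC (Num.sqrt (d%:R - 1 : R)).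
have hmax : max_ent R d = G^-1 *: S by [].
have heS : ip e S = 1.
  rewrite ip_sumr (eq_big_nat _ _ (F2 := fun j => ((0 == j)%N)%:R)).
    exact: sum_delta.
  by move=> j _; rewrite /e /kk ipkk.
have hSS : ip S S = d%:R.
  rewrite ip_suml (eq_big_nat _ _ (F2 := fun j => 1)).
    by rewrite sumr_const_nat subn0.
  move=> i /andP[_ hi]; rewrite ip_sumr (eq_big_nat _ _ (F2 := fun j => ((i == j)%N)%:R)).
    exact: sum_delta.
  by move=> j _; rewrite /kk ipkk.
have hSe : ip S e = 1 by rewrite ipC heS conjC1.
have hee : ip e e = 1 by rewrite /e /kk ipkk.
have heg : ip e g = 0 by rewrite /g ipDr ipNr heS hee subrr.
have hge : ip g e = 0 by rewrite ipC heg conjC0.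
have hgg : ip g g = d%:R - 1.
  by rewrite /g ipDl ipNl !ipDr !ipNr hSS hSe heS hee subrr subr0.
have hx0 : (Iq R d *t (1%:M : 'M[C]_d)) *m max_ent R d = G^-1 *: (e + g).
  rewrite hmax /g addrC subrK -scalemxAr mulmx_sumr; congr (_ *: _).
  by apply: eq_bigr => i _; rewrite /kk tensmx_mulv Iq1 !mul1mx.
have hx1 : (Vq R d *t (1%:M : 'M[C]_d)) *m max_ent R d = G^-1 *: (e - g).
  rewrite hmax -scalemxAr mulmx_sumr; congr (_ *: _).
  rewrite (eq_big_nat _ _ (F2 := fun i => ((i == 0)%N%:R * 2) *: (ket R d 0 *t ket R d i) - kk i)); last first.
    move=> i /andP[_ hi]; rewrite /kk tensmx_mulv mul1mx Vq_ket //.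
    by rewrite tensDl tensNl tensZl.
  rewrite sumrB big_ltn //= mul1r.
  rewrite (eq_big_nat _ _ (F2 := fun _ => 0)); last first.
    by move=> i /andP[hi _]; rewrite eqn0Ngt hi mul0r scale0r.
  rewrite big1_eq addr0 /g opprB addrA.
  by rewrite scaler_nat mulr2n.
clearbody g.
have hsd : (0 : R) < Num.sqrt (d%:R : R) by rewrite sqrtr_gt0 ltr0n.
have hs : (0 : R) < Num.sqrt (d%:R - 1 : R).
  by rewrite sqrtr_gt0 subr_gt0 ltr1n.
have hG0 : G != 0 by rewrite /G toC_eq0 gt_eqF.
have hT0 : T != 0 by rewrite /T toC_eq0 gt_eqF.
have hGsq : G ^+ 2 = d%:R.
  by rewrite /G expr2 -toCM -expr2 sqr_sqrtr ?ler0n // toCn.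
have hTsq : T ^+ 2 = d%:R - 1.
  rewrite /T expr2 -toCM -expr2 sqr_sqrtr ?toCB ?toCn ?toC1 //.
  by rewrite subr_ge0 ler1n; apply: leq_trans hd.
have hGc : (G^-1)^* = G^-1 by rewrite /G toCV_real.
have hTc : (T^-1)^* = T^-1 by rewrite /T toCV_real.
set h := T^-1 *: g.
set u := e + h.
have heh : ip e h = 0 by rewrite /h ipZr heg mulr0.
have hhe : ip h e = 0 by rewrite /h ipZl hge mulr0.
have hhh : ip h h = 1.
  rewrite /h ipZl ipZr hgg hTc -hTsq; field; exact: hT0.
have huu : ip u u = 2.
  by rewrite /u !ipDl !ipDr hee heh hhe hhh addr0 add0r.
have h11 : ip (G^-1 *: (e - g)) (G^-1 *: (e - g)) = 1.
  rewrite ipZl ipZr hGc !ipDl !ipDr !ipNl !ipNr hee heg hge hgg.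
  rewrite -hGsq; field; exact: hG0.
have hR : toC (ent_opt R d) = 2^-1 * (1 + G^-1 / G * (T * 2)).
  rewrite /ent_opt sqrt_id // !(toCM, toCD, toCV, toCn, toC1) -/T -hGsq.
  field; exact: hG0.
have hhg : ip h g = T^-1 * (d%:R - 1) by rewrite /h ipZl hTc hgg.
have hgh : ip g h = T^-1 * (d%:R - 1) by rewrite /h ipZr hgg.
split.
  exists (proj 2^-1 u), (1%:M - proj 2^-1 u); split.
    by apply: povm_proj; rewrite huu toCV toCn mulVf // pnatr_eq0.
  rewrite /succ_prob !tr_out hx0 hx1 mulmxBl mul1mx ipDr ipNr h11 !ip_proj.
  have a0 : ip u (G^-1 *: (e + g)) = G^-1 * (1 + T^-1 * (d%:R - 1)).
    by rewrite ipZr /u !ipDl !ipDr hee heg hhe hhg addr0 add0r.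
  have a0' : ip (G^-1 *: (e + g)) u = G^-1 * (1 + T^-1 * (d%:R - 1)).
    by rewrite ipZl hGc /u !ipDl !ipDr hee heh hge hgh addr0 add0r.
  have a1 : ip u (G^-1 *: (e - g)) = G^-1 * (1 - T^-1 * (d%:R - 1)).
    by rewrite ipZr /u !ipDl !ipDr !ipNr hee heg hhe hhg subr0 add0r.
  have a1' : ip (G^-1 *: (e - g)) u = G^-1 * (1 - T^-1 * (d%:R - 1)).
    by rewrite ipZl hGc /u !ipDl !ipNl !ipDr hee heh hge hgh addr0 add0r.
  rewrite a0 a0' a1 a1' toCV toCn hR -hTsq.
  field; by rewrite hG0 hT0.
move=> E0 E1 [p0 [p1 hsum]].
have hE1 : E1 = 1%:M - E0 by rewrite -hsum [E0 + E1]addrC addrK.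
rewrite /succ_prob !tr_out hx0 hx1 hE1 mulmxBl mul1mx ipDr ipNr h11 !ipZZ hGc.
set P := ip u (E0 *m u).
set Q := ip (e - h) (E0 *m (e - h)).
have hAB : ip (e + g) (E0 *m (e + g)) - ip (e - g) (E0 *m (e - g)) = T * (P - Q).
  rewrite /P /Q /u polar polar /h -!scalemxAr ipZr ipZl hTc.
  field; exact: hT0.
have hP : P <= 2.
  have := psd_ip u p1; rewrite hE1 mulmxBl mul1mx ipDr ipNr huu.
  by rewrite subr_ge0.
have hQ : 0 <= Q by apply: psd_ip.
have -> : 2^-1 * (G^-1 / G * ip (e + g) (E0 *m (e + g)) +
   (1 - G^-1 / G * ip (e - g) (E0 *m (e - g)))) =
   2^-1 * (1 + G^-1 / G * (T * (P - Q))) by rewrite -hAB; ring.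
rewrite hR ler_wpM2l ?invr_ge0 ?ler0n // lerD2l ler_wpM2l //.
  by rewrite /G -toCV -toCM toC_ge0 mulr_ge0 ?invr_ge0 ?sqrtr_ge0.
rewrite ler_wpM2l ?/T ?toC_ge0 ?sqrtr_ge0 //.
by apply: le_trans hP; rewrite gerBl.
Qed.

End G.

Lemma part3 (R : realType) : (fun d : nat => ent_opt R d) @ \oo --> (2^-1 : R).
Proof.
rewrite -cvg_shiftS.
pose f (x : R) := 2^-1 * (1 + Num.sqrt (1 - (1 - 2 * x) ^+ 2)).
have -> : [sequence ent_opt R n.+1]_n = f \o harmonic.
  by apply/funext => n /=; rewrite /ent_opt /f.
have -> : (2^-1 : R) = f 0.
  by rewrite /f mulr0 subr0 expr1n subrr sqrtr0 addr0 mulr1.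
apply: cvg_comp; first exact: cvg_harmonic.
rewrite /f.
apply: cvgM; first exact: cvg_cst.
apply: cvgD; first exact: cvg_cst.
apply: cvg_comp; last exact: sqrt_continuous.
apply: cvgB; first exact: cvg_cst.
rewrite expr2; apply: cvgM;
  (apply: cvgB; first exact: cvg_cst);
  (apply: cvgM; first exact: cvg_cst);
  exact: cvg_id.
Qed.

Theorem mainTheorem12 (R : realType) :
  (forall d : nat, (2 <= d)%N ->
     perfectly_distinguishable (Iq R d) (Vq R d)
       (plus_state R d *t (ket R 1 0 : 'cV[R[i]]_1)))
  /\ (forall d : nat, (2 <= d)%N ->
     opt_succ_prob (Iq R d) (Vq R d) (max_ent R d) (toC (ent_opt R d)))
  /\ (fun d : nat => ent_opt R d) @ \oo --> (2^-1 : R).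
Proof.
split; first exact: (@part1 R).
split; first exact: (@part2 R).
exact: part3.
Qed.
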